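(* Let $\Omega\subset\mathbb{R}^2$ be open, $\lambda>0$, and let $u\in L^2(\Omega)$ satisfy $-\Delta u=\lambda u$ in $\Omega$. Let $\mathbf{x}_0\in\Omega$, $h>0$, $\alpha\in(0,1)$, and let $\mathbf{e}^-,\mathbf{e}^+$ be unit vectors such that the angle from $\mathbf{e}^-$ to $\mathbf{e}^+$ is $\alpha\pi$; put $\Gamma^\pm=\{\mathbf{x}_0+t\mathbf{e}^\pm:0\le t\le h\}\subset\Omega$. Suppose $\Gamma^-$ and $\Gamma^+$ are generalized singular lines of $u$ with constant parameters $\eta_1\equiv C_1$ on $\Gamma^-$ and $\eta_2\equiv C_2$ on $\Gamma^+$. Let $n\in\mathbb{N}$, $n\ge3$. If $u(\mathbf{x}_0)=0$ and $\alpha\neq q/p$ for all integers $1\le q<p\le n-1$, then $u$ vanishes up to the order $n$ at $\mathbf{x}_0$, i.e. all partial derivatives of $u$ of order at most $n-1$ vanish at $\mathbf{x}_0$.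
   Context: No boundary condition is imposed on $\partial\Omega$; $u$ is real-analytic in $\Omega$. A line segment $\Gamma\subset\Omega$ is a generalized singular line of $u$ with parameter $\eta$ (a complex-valued function on $\Gamma$ not identically zero; here a nonzero complex constant) if $\partial_\nu u+\eta u=0$ on $\Gamma$, $\nu$ a unit normal vector to $\Gamma$. ''Vanishes up to order $n$ at $\mathbf{x}_0$'' means every homogeneous term of degree $<n$ in the Taylor expansion of $u$ at $\mathbf{x}_0$ is zero. *)

(* Defs.v *)
From Stdlib Require Import Reals List.
From Coquelicot Require Import Coquelicot.
Open Scope R_scope.

Definition dx (f : R * R -> R) : R * R -> R :=
  fun p => Derive (fun t => f (t, snd p)) (fst p).
Definition dy (f : R * R -> R) : R * R -> R :=
  fun p => Derive (fun t => f (fst p, t)) (snd p).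

(* Iterated partial derivative along a word of directions
   (true = d/dx, false = d/dy); the head of the list is applied last. *)
Fixpoint pdw (w : list bool) (f : R * R -> R) : R * R -> R :=
  match w with
  | nil => f
  | b :: w' => (if b then dx else dy) (pdw w' f)
  end.

Definition smooth_on (O : R * R -> Prop) (f : R * R -> R) : Prop :=
  forall (w : list bool) (p : R * R), O p ->
    continuous (pdw w f) p /\
    ex_derive (fun t => pdw w f (t, snd p)) (fst p) /\
    ex_derive (fun t => pdw w f (fst p, t)) (snd p).

Definition ReF (u : R * R -> C) : R * R -> R := fun p => Re (u p).
Definition ImF (u : R * R -> C) : R * R -> R := fun p => Im (u p).

Definition lap (f : R * R -> R) : R * R -> R :=
  fun p => dx (dx f) p + dy (dy f) p.

Definition helmholtz (O : R * R -> Prop) (lam : R) (u : R * R -> C) : Prop :=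
  forall p, O p ->
    - lap (ReF u) p = lam * ReF u p /\ - lap (ImF u) p = lam * ImF u p.

Definition seg_pt (x0 e : R * R) (t : R) : R * R :=
  (fst x0 + t * fst e, snd x0 + t * snd e).

Definition dnu (nu : R * R) (u : R * R -> C) (p : R * R) : C :=
  (fst nu * dx (ReF u) p + snd nu * dy (ReF u) p,
   fst nu * dx (ImF u) p + snd nu * dy (ImF u) p).

Definition gen_singular_line (u : R * R -> C) (x0 e : R * R) (h : R)
    (eta : C) : Prop :=
  eta <> RtoC 0 /\
  exists nu : R * R,
    fst nu ^ 2 + snd nu ^ 2 = 1 /\ fst nu * fst e + snd nu * snd e = 0 /\
    forall t, 0 <= t <= h ->
      Cplus (dnu nu u (seg_pt x0 e t)) (Cmult eta (u (seg_pt x0 e t)))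
        = RtoC 0.

(* Main.v *)
Require Import Defs.
From Stdlib Require Import Reals List Lra Lia ZArith.
From Coquelicot Require Import Coquelicot.
Open Scope R_scope.


Lemma open_l2d (O : R * R -> Prop) p : open O -> O p ->
  locally_2d (fun u v => O (u, v)) (fst p) (snd p).
Proof.
  intros HO Hp. destruct (HO p Hp) as [eps He].
  exists eps. intros u v Hu Hv. apply He. split; simpl.
  - exact Hu.
  - exact Hv.
Qed.

Lemma open_lx (O : R * R -> Prop) p : open O -> O p ->
  locally (fst p) (fun t => O (t, snd p)).
Proof.
  intros HO Hp. destruct (HO p Hp) as [eps He].
  exists eps. intros t Ht. apply He. split; simpl.
  - exact Ht.
  - apply ball_center.
Qed.

Lemma open_ly (O : R * R -> Prop) p : open O -> O p ->
  locally (snd p) (fun t => O (fst p, t)).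
Proof.
  intros HO Hp. destruct (HO p Hp) as [eps He].
  exists eps. intros t Ht. apply He. split; simpl.
  - apply ball_center.
  - exact Ht.
Qed.

Lemma pdw_app w1 w2 f : pdw (w1 ++ w2) f = pdw w1 (pdw w2 f).
Proof. induction w1 as [|b w1 IH]; simpl; [reflexivity|rewrite IH; reflexivity]. Qed.

Lemma smooth_pdw O f v : smooth_on O f -> smooth_on O (pdw v f).
Proof. intros H w p Hp. rewrite <- pdw_app. apply H; exact Hp. Qed.

Lemma cont2d O f p : smooth_on O f -> O p ->
  continuity_2d_pt (fun u v => f (u, v)) (fst p) (snd p).
Proof.
  intros H Hp. apply continuity_2d_pt_filterlim.
  destruct (H nil p Hp) as [Hc _]. simpl in Hc.
  destruct p as [p1 p2]. simpl.
  eapply filterlim_ext; [|exact Hc].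
  intros [a b]; reflexivity.
Qed.

Lemma dx_ext_O O F G p : open O -> O p -> (forall q, O q -> F q = G q) ->
  dx F p = dx G p.
Proof.
  intros HO Hp H. unfold dx. apply Derive_ext_loc.
  generalize (open_lx O p HO Hp). apply filter_imp. intros t Ht. apply H, Ht.
Qed.

Lemma dy_ext_O O F G p : open O -> O p -> (forall q, O q -> F q = G q) ->
  dy F p = dy G p.
Proof.
  intros HO Hp H. unfold dy. apply Derive_ext_loc.
  generalize (open_ly O p HO Hp). apply filter_imp. intros t Ht. apply H, Ht.
Qed.

Lemma pdw_ext_O O F G : open O -> (forall q, O q -> F q = G q) ->
  forall w p, O p -> pdw w F p = pdw w G p.
Proof.
  intros HO H w. induction w as [|b w IH]; intros p Hp; simpl.
  - apply H, Hp.
  - destruct b; [apply dx_ext_O with O|apply dy_ext_O with O]; auto.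
Qed.

Lemma pdw_scal c F : forall w p, pdw w (fun q => c * F q) p = c * pdw w F p.
Proof.
  intros w. induction w as [|b w IH]; intros p; simpl.
  - reflexivity.
  - destruct b; [unfold dx|unfold dy];
    rewrite <- Derive_scal; apply Derive_ext; intros t; apply IH.
Qed.

Lemma pdw_plus O F G : open O -> smooth_on O F -> smooth_on O G ->
  forall w p, O p -> pdw w (fun q => F q + G q) p = pdw w F p + pdw w G p.
Proof.
  intros HO HF HG w. induction w as [|b w IH]; intros p Hp; simpl.
  - reflexivity.
  - destruct (HF w p Hp) as [_ [HF1 HF2]].
    destruct (HG w p Hp) as [_ [HG1 HG2]].
    destruct b.
    + unfold dx. rewrite <- Derive_plus by assumption.
      apply Derive_ext_loc.
      generalize (open_lx O p HO Hp). apply filter_imp. intros t Ht.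
      apply IH, Ht.
    + unfold dy. rewrite <- Derive_plus by assumption.
      apply Derive_ext_loc.
      generalize (open_ly O p HO Hp). apply filter_imp. intros t Ht.
      apply IH, Ht.
Qed.

Lemma swap_xy O G p : open O -> smooth_on O G -> O p ->
  dx (dy G) p = dy (dx G) p.
Proof.
  intros HO HG Hp. destruct p as [p1 p2]. unfold dx, dy; simpl.
  apply (Schwarz (fun u v => G (u, v)) p1 p2).
  - generalize (open_l2d O (p1,p2) HO Hp). simpl.
    intros [d Hd]. exists d. intros u v Hu Hv.
    specialize (Hd u v Hu Hv).
    destruct (HG nil (u,v) Hd) as [_ [A1 A2]].
    destruct (HG (false::nil) (u,v) Hd) as [_ [B1 _]].
    destruct (HG (true::nil) (u,v) Hd) as [_ [_ C2]].
    simpl in *. unfold dx, dy in *; simpl in *.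
    repeat split; assumption.
  - apply (cont2d O (pdw (true::false::nil) G) (p1,p2)); [|exact Hp].
    apply smooth_pdw; exact HG.
  - apply (cont2d O (pdw (false::true::nil) G) (p1,p2)); [|exact Hp].
    apply smooth_pdw; exact HG.
Qed.

Fixpoint nt (w : list bool) : nat :=
  match w with nil => 0%nat | true :: w => S (nt w) | false :: w => nt w end.
Fixpoint nf (w : list bool) : nat :=
  match w with nil => 0%nat | true :: w => nf w | false :: w => S (nf w) end.
Definition canon w := repeat true (nt w) ++ repeat false (nf w).

Lemma dxy_ext O F G b p : open O -> O p -> (forall q, O q -> F q = G q) ->
  pdw (b :: nil) F p = pdw (b :: nil) G p.
Proof.
  intros. destruct b; simpl; [apply dx_ext_O with O|apply dy_ext_O with O]; auto.
Qed.

Lemma move_false O f : open O -> smooth_on O f -> forall a r p, O p ->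
  pdw (false :: repeat true a ++ r) f p = pdw (repeat true a ++ false :: r) f p.
Proof.
  intros HO Hf a. induction a as [|a IH]; intros r p Hp.
  - reflexivity.
  - simpl. rewrite <- (swap_xy O (pdw (repeat true a ++ r) f) p HO); auto.
    2: apply smooth_pdw; auto.
    apply dx_ext_O with O; auto.
    intros q Hq. apply (IH r q Hq).
Qed.

Lemma canon_eq O f : open O -> smooth_on O f -> forall w p, O p ->
  pdw w f p = pdw (canon w) f p.
Proof.
  intros HO Hf w. induction w as [|b w IH]; intros p Hp.
  - reflexivity.
  - destruct b.
    + unfold canon; simpl. apply dx_ext_O with O; auto.
    + unfold canon; simpl.
      transitivity (pdw (false :: canon w) f p).
      * simpl. apply dy_ext_O with O; auto.
      * unfold canon. rewrite (move_false O f HO Hf _ _ p Hp). reflexivity.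
Qed.

Lemma nt_app a b : nt (a ++ b) = (nt a + nt b)%nat.
Proof. induction a as [|[] a IH]; simpl; auto. Qed.
Lemma nf_app a b : nf (a ++ b) = (nf a + nf b)%nat.
Proof. induction a as [|[] a IH]; simpl; auto. Qed.
Lemma nt_rt a : nt (repeat true a) = a.
Proof. induction a; simpl; auto. Qed.
Lemma nf_rt a : nf (repeat true a) = 0%nat.
Proof. induction a; simpl; auto. Qed.
Lemma nt_rf a : nt (repeat false a) = 0%nat.
Proof. induction a; simpl; auto. Qed.
Lemma nf_rf a : nf (repeat false a) = a.
Proof. induction a; simpl; auto. Qed.
Lemma ntnf w : (nt w + nf w)%nat = length w.
Proof. induction w as [|[] w IH]; simpl; lia. Qed.

Lemma diff_partials (F : R -> R -> R) x y :
  locally_2d (fun u v => ex_derive (fun z => F z v) u) x y ->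
  continuity_2d_pt (fun u v => Derive (fun z => F z v) u) x y ->
  ex_derive (fun z => F x z) y ->
  differentiable_pt_lim F x y (Derive (fun z => F z y) x) (Derive (fun z => F x z) y).
Proof.
  intros [d0 H0] Hc Hy eps.
  assert (He2 : 0 < eps / 2) by (generalize (cond_pos eps); lra).
  set (e2 := mkposreal _ He2).
  destruct (Hc e2) as [d1 H1].
  apply Derive_correct in Hy. apply is_derive_Reals in Hy.
  destruct (Hy e2 (cond_pos e2)) as [d2 H2].
  assert (Hd : 0 < Rmin d0 (Rmin d1 d2)).
  { apply Rmin_pos; [apply cond_pos|apply Rmin_pos; apply cond_pos]. }
  exists (mkposreal _ Hd). intros u v Hu Hv. simpl in Hu, Hv.
  assert (Hu0 : Rabs (u - x) < d0) by (eapply Rlt_le_trans; [exact Hu|apply Rmin_l]).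
  assert (Hv0 : Rabs (v - y) < d0) by (eapply Rlt_le_trans; [exact Hv|apply Rmin_l]).
  assert (Hu1 : Rabs (u - x) < d1) by (eapply Rlt_le_trans; [exact Hu|
     eapply Rle_trans; [apply Rmin_r|apply Rmin_l]]).
  assert (Hv1 : Rabs (v - y) < d1) by (eapply Rlt_le_trans; [exact Hv|
     eapply Rle_trans; [apply Rmin_r|apply Rmin_l]]).
  assert (Hv2 : Rabs (v - y) < d2) by (eapply Rlt_le_trans; [exact Hv|
     eapply Rle_trans; [apply Rmin_r|apply Rmin_r]]).
  set (Fx := Derive (fun z => F z y) x). set (Fy := Derive (fun z => F x z) y).
  assert (HA : exists c, Rabs (c - x) <= Rabs (u - x) /\
             F u v - F x v = Derive (fun z => F z v) c * (u - x)).
  { assert (Hin : forall z, Rmin x u <= z <= Rmax x u -> Rabs (z - x) <= Rabs (u - x)).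
    { intros z [Hz1 Hz2]. unfold Rmin, Rmax in *.
      destruct (Rle_dec x u); unfold Rabs; repeat destruct Rcase_abs; lra. }
    destruct (MVT_gen (fun z => F z v) x u (fun z => Derive (fun z' => F z' v) z))
      as [c [Hc1 Hc2]].
    - intros z Hz. apply Derive_correct. apply H0; [|exact Hv0].
      eapply Rle_lt_trans; [apply Hin; lra|exact Hu0].
    - intros z Hz. apply continuity_pt_filterlim. apply (ex_derive_continuous (K:=R_AbsRing) (V:=R_NormedModule) (fun z => F z v)).
      apply H0; [|exact Hv0].
      eapply Rle_lt_trans; [apply Hin; lra|exact Hu0].
    - exists c. split; [apply Hin; exact Hc1|exact Hc2]. }
  destruct HA as [c [Hc1 Hc2]].
  assert (Hcd : Rabs (Derive (fun z => F z v) c - Fx) < e2).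
  { apply H1; [lra|exact Hv1]. }
  assert (HB : Rabs (F x v - F x y - Fy * (v - y)) <= e2 * Rabs (v - y)).
  { destruct (Req_dec v y) as [E|E].
    - subst v. replace (F x y - F x y - Fy * (y - y)) with 0 by ring.
      rewrite Rminus_eq_0, Rabs_R0, Rmult_0_r. lra.
    - assert (Hh : v - y <> 0) by lra.
      specialize (H2 (v - y) Hh Hv2).
      replace (y + (v - y)) with v in H2 by ring.
      replace (F x v - F x y - Fy * (v - y)) with
        (((F x v - F x y) / (v - y) - Fy) * (v - y)) by (field; exact Hh).
      rewrite Rabs_mult. apply Rmult_le_compat_r; [apply Rabs_pos|]. apply Rlt_le; exact H2. }
  replace (F u v - F x y - (Fx * (u - x) + Fy * (v - y))) with
    ((Derive (fun z => F z v) c - Fx) * (u - x) + (F x v - F x y - Fy * (v - y)))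
    by (replace ((Derive (fun z => F z v) c - Fx) * (u - x)) with (Derive (fun z => F z v) c * (u - x) - Fx * (u - x)) by ring; rewrite <- Hc2; ring).
  eapply Rle_trans; [apply Rabs_triang|].
  rewrite Rabs_mult.
  assert (M1 : Rabs (u - x) <= Rmax (Rabs (u - x)) (Rabs (v - y))) by apply Rmax_l.
  assert (M2 : Rabs (v - y) <= Rmax (Rabs (u - x)) (Rabs (v - y))) by apply Rmax_r.
  assert (P1 : 0 <= Rabs (u - x)) by apply Rabs_pos.
  assert (P2 : 0 <= Rabs (Derive (fun z => F z v) c - Fx)) by apply Rabs_pos.
  simpl in *.
  apply Rle_trans with (eps / 2 * Rmax (Rabs (u - x)) (Rabs (v - y)) +
                        eps / 2 * Rmax (Rabs (u - x)) (Rabs (v - y))); [|lra].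
  apply Rplus_le_compat.
  - apply Rle_trans with (eps/2 * Rabs (u - x)).
    + apply Rmult_le_compat_r; lra.
    + apply Rmult_le_compat_l; lra.
  - eapply Rle_trans; [exact HB|]. apply Rmult_le_compat_l; lra.
Qed.

Lemma chain O f v x0 e t : open O -> smooth_on O f -> O (seg_pt x0 e t) ->
  is_derive (fun s => pdw v f (seg_pt x0 e s)) t
    (fst e * pdw (true::v) f (seg_pt x0 e t) + snd e * pdw (false::v) f (seg_pt x0 e t)).
Proof.
  intros HO Hf Hq.
  assert (HG : smooth_on O (pdw v f)) by (apply smooth_pdw; exact Hf).
  set (G := pdw v f) in *.
  set (F := fun a b => G (a, b)).
  set (q := seg_pt x0 e t) in *.
  assert (Hdiff : differentiable_pt_lim F (fst q) (snd q)
           (Derive (fun z => F z (snd q)) (fst q)) (Derive (fun z => F (fst q) z) (snd q))).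
  { apply diff_partials.
    - destruct (open_l2d O q HO Hq) as [d Hd]. exists d. intros a b Ha Hb.
      destruct (HG nil (a,b) (Hd a b Ha Hb)) as [_ [H1 _]]. exact H1.
    - apply (cont2d O (pdw (true::nil) G) q); [apply smooth_pdw; exact HG|exact Hq].
    - destruct (HG nil q Hq) as [_ [_ H2]]. exact H2. }
  apply is_derive_Reals.
  assert (H2 : derivable_pt_lim (fun s => fst x0 + s * fst e) t (fst e)).
  { apply is_derive_Reals. auto_derive; [exact I|ring]. }
  assert (H3 : derivable_pt_lim (fun s => snd x0 + s * snd e) t (snd e)).
  { apply is_derive_Reals. auto_derive; [exact I|ring]. }
  generalize (derivable_pt_lim_comp_2d F (fun s => fst x0 + s * fst e) (fun s => snd x0 + s * snd e) t _ _ _ _ Hdiff H2 H3).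
  intros Hc.
  replace (fst e * pdw (true :: v) f q + snd e * pdw (false :: v) f q) with
    (Derive (fun z => F z (snd q)) (fst q) * fst e + Derive (fun z => F (fst q) z) (snd q) * snd e).
  - exact Hc.
  - simpl. rewrite (Rmult_comm (fst e)), (Rmult_comm (snd e)). reflexivity.
Qed.

Fixpoint Sm (e : R * R) (k : nat) (F : list bool -> R) : R :=
  match k with
  | O => F nil
  | S k => fst e * Sm e k (fun w => F (true :: w)) + snd e * Sm e k (fun w => F (false :: w))
  end.

Lemma Sm_ext e k : forall F G, (forall w, length w = k -> F w = G w) -> Sm e k F = Sm e k G.
Proof.
  induction k as [|k IH]; intros F G H; simpl.
  - apply H; reflexivity.
  - f_equal; f_equal; apply IH; intros w Hw; apply H; simpl; auto.
Qed.

Lemma Sm_lin e k : forall a b F G,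
  Sm e k (fun w => a * F w + b * G w) = a * Sm e k F + b * Sm e k G.
Proof.
  induction k as [|k IH]; intros a b F G; simpl.
  - reflexivity.
  - rewrite (IH a b (fun w => F (true :: w))), (IH a b (fun w => F (false :: w))). ring.
Qed.

Lemma Sm_derive e k t : forall (Fam : list bool -> R -> R) (dF : list bool -> R),
  (forall w, is_derive (Fam w) t (dF w)) ->
  is_derive (fun s => Sm e k (fun w => Fam w s)) t (Sm e k dF).
Proof.
  induction k as [|k IH]; intros Fam dF H; simpl.
  - apply H.
  - apply (is_derive_plus (K:=R_AbsRing) (V:=R_NormedModule)
      (fun s => fst e * Sm e k (fun w => Fam (true :: w) s))
      (fun s => snd e * Sm e k (fun w => Fam (false :: w) s))).
    + apply is_derive_scal. apply (IH (fun w => Fam (true :: w))). intros; apply H.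
    + apply is_derive_scal. apply (IH (fun w => Fam (false :: w))). intros; apply H.
Qed.

Lemma deriv_zero_on (phi : R -> R) h t l : 0 < h -> 0 <= t <= h ->
  (forall s, 0 <= s <= h -> phi s = 0) -> is_derive phi t l -> l = 0.
Proof.
  intros Hh Ht Hz Hd. apply is_derive_Reals in Hd.
  destruct (Req_dec l 0) as [E|E]; [exact E|exfalso].
  assert (Hl : 0 < Rabs l) by (apply Rabs_pos_lt; exact E).
  destruct (Hd (Rabs l) Hl) as [d Hdd].
  set (r := Rmin (d / 2) (h / 2)).
  assert (Hr : 0 < r) by (unfold r; apply Rmin_pos; generalize (cond_pos d); lra).
  assert (Hr1 : r <= d / 2) by apply Rmin_l.
  assert (Hr2 : r <= h / 2) by apply Rmin_r.
  assert (Hd0 : 0 < d) by apply cond_pos.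
  destruct (Rle_dec t (h / 2)) as [Ht2|Ht2].
  - specialize (Hdd r ltac:(lra) ltac:(rewrite Rabs_pos_eq; lra)).
    rewrite (Hz t), (Hz (t + r)) in Hdd by lra.
    replace ((0 - 0) / r - l) with (- l) in Hdd by (field; lra).
    rewrite Rabs_Ropp in Hdd. lra.
  - specialize (Hdd (- r) ltac:(lra) ltac:(rewrite Rabs_Ropp, Rabs_pos_eq; lra)).
    rewrite (Hz t), (Hz (t + - r)) in Hdd by lra.
    replace ((0 - 0) / - r - l) with (- l) in Hdd by (field; lra).
    rewrite Rabs_Ropp in Hdd. lra.
Qed.

Definition Xr (F G : R * R -> R) (nu : R * R) (a b : R) (w : list bool) (p : R * R) : R :=
  fst nu * pdw (w ++ true :: nil) F p + snd nu * pdw (w ++ false :: nil) F p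
  + a * pdw w F p + b * pdw w G p.

Lemma ray_vanish O F G nu a b x0 e h : open O -> smooth_on O F -> smooth_on O G ->
  0 < h -> (forall t, 0 <= t <= h -> O (seg_pt x0 e t)) ->
  (forall t, 0 <= t <= h -> Xr F G nu a b nil (seg_pt x0 e t) = 0) ->
  forall k t, 0 <= t <= h -> Sm e k (fun w => Xr F G nu a b w (seg_pt x0 e t)) = 0.
Proof.
  intros HO HF HG Hh Hseg H0 k. induction k as [|k IH]; intros t Ht.
  - simpl. apply H0, Ht.
  - apply (deriv_zero_on (fun s => Sm e k (fun w => Xr F G nu a b w (seg_pt x0 e s))) h t);
      [exact Hh|exact Ht|exact IH|].
    assert (Hq := Hseg t Ht).
    assert (HD : is_derive (fun s => Sm e k (fun w => Xr F G nu a b w (seg_pt x0 e s))) t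
       (Sm e k (fun w => fst e * Xr F G nu a b (true :: w) (seg_pt x0 e t)
                      + snd e * Xr F G nu a b (false :: w) (seg_pt x0 e t)))).
    { apply (Sm_derive e k t (fun w s => Xr F G nu a b w (seg_pt x0 e s))).
      intros w. unfold Xr.
      assert (D1 := chain O F (w ++ true :: nil) x0 e t HO HF Hq).
      assert (D2 := chain O F (w ++ false :: nil) x0 e t HO HF Hq).
      assert (D3 := chain O F w x0 e t HO HF Hq).
      assert (D4 := chain O G w x0 e t HO HG Hq).
      apply is_derive_scal with (k := fst nu) in D1.
      apply is_derive_scal with (k := snd nu) in D2.
      apply is_derive_scal with (k := a) in D3.
      apply is_derive_scal with (k := b) in D4.
      assert (D := is_derive_plus (K:=R_AbsRing) (V:=R_NormedModule) _ _ _ _ _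
         (is_derive_plus (K:=R_AbsRing) (V:=R_NormedModule) _ _ _ _ _
            (is_derive_plus (K:=R_AbsRing) (V:=R_NormedModule) _ _ _ _ _ D1 D2) D3) D4).
      simpl in D. unfold plus in D; simpl in D.
      eapply is_derive_ext; [|eapply (is_derive_ext _ _ _ _ (fun _ => eq_refl)) in D].
      2: { simpl. replace (fst e * _ + snd e * _) with (fst nu * (fst e * dx (pdw (w ++ true :: nil) F) (seg_pt x0 e t) +
         snd e * dy (pdw (w ++ true :: nil) F) (seg_pt x0 e t)) +
        snd nu * (fst e * dx (pdw (w ++ false :: nil) F) (seg_pt x0 e t) +
         snd e * dy (pdw (w ++ false :: nil) F) (seg_pt x0 e t)) +
        a * (fst e * dx (pdw w F) (seg_pt x0 e t) + snd e * dy (pdw w F) (seg_pt x0 e t)) +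
        b * (fst e * dx (pdw w G) (seg_pt x0 e t) + snd e * dy (pdw w G) (seg_pt x0 e t))) by ring.
        exact D. }
      intros s. reflexivity. }
    replace (Sm e (S k) (fun w => Xr F G nu a b w (seg_pt x0 e t))) with
      (Sm e k (fun w => fst e * Xr F G nu a b (true :: w) (seg_pt x0 e t)
                      + snd e * Xr F G nu a b (false :: w) (seg_pt x0 e t))).
    + exact HD.
    + rewrite Sm_lin. reflexivity.
Qed.

Definition cm (a b : R * R) : R * R :=
  (fst a * fst b - snd a * snd b, fst a * snd b + snd a * fst b).
Fixpoint Ip (m : nat) : R * R :=
  match m with O => (1, 0) | S m => cm (0, 1) (Ip m) end.
Fixpoint Ep (e : R * R) (k : nat) : R * R :=
  match k with O => (1, 0) | S k => cm e (Ep e k) end.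

Lemma Sm_Ip e k : forall Z, Sm e k (fun w => fst (cm (Ip (nf w)) Z)) = fst (cm Z (Ep e k)).
Proof.
  induction k as [|k IH]; intros Z; cbn [Sm nf Ip Ep].
  - destruct Z; unfold cm; simpl; ring.
  - rewrite IH.
    rewrite (Sm_ext e k _ (fun w => fst (cm (Ip (nf w)) (cm (0,1) Z)))).
    + rewrite IH. destruct Z as [z1 z2]; destruct (Ep e k) as [p1 p2]; destruct e as [e1 e2].
      unfold cm; simpl; ring.
    + intros w _. destruct (Ip (nf w)) as [i1 i2]; destruct Z as [z1 z2]; unfold cm; simpl; ring.
Qed.

Lemma Ep_mul a b k : Ep (cm a b) k = cm (Ep a k) (Ep b k).
Proof.
  induction k as [|k IH]; simpl.
  - unfold cm; simpl; f_equal; ring.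
  - rewrite IH. destruct a as [a1 a2], b as [b1 b2], (Ep (a1,a2) k) as [x1 x2],
      (Ep (b1,b2) k) as [y1 y2]. unfold cm; simpl; f_equal; ring.
Qed.

Lemma Ep_trig th k : Ep (cos th, sin th) k = (cos (INR k * th), sin (INR k * th)).
Proof.
  induction k as [|k IH].
  - simpl. rewrite Rmult_0_l, cos_0, sin_0. reflexivity.
  - simpl Ep. rewrite IH. rewrite S_INR.
    replace ((INR k + 1) * th) with (th + INR k * th) by ring.
    rewrite cos_plus, sin_plus. unfold cm; simpl. f_equal; ring.
Qed.

Lemma alg_normal e1 e2 n1 n2 b1 b2 p1 p2 :
  e1 ^ 2 + e2 ^ 2 = 1 -> n1 ^ 2 + n2 ^ 2 = 1 -> n1 * e1 + n2 * e2 = 0 ->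
  fst (cm (cm (n1, n2) (b1, b2)) (p1, p2)) = 0 ->
  snd (cm (b1, b2) (cm (e1, e2) (p1, p2))) = 0.
Proof.
  intros He Hn Hd H. unfold cm in H |- *; simpl in H |- *.
  set (s := n2 * e1 - n1 * e2).
  assert (E1 : n1 + s * e2 = n1 * (1 - (e1 ^ 2 + e2 ^ 2)) + e1 * (n1 * e1 + n2 * e2))
    by (unfold s; ring).
  assert (E2 : n2 - s * e1 = n2 * (1 - (e1 ^ 2 + e2 ^ 2)) + e2 * (n1 * e1 + n2 * e2))
    by (unfold s; ring).
  rewrite He, Hd in E1, E2.
  assert (N1 : n1 = - s * e2) by lra.
  assert (N2 : n2 = s * e1) by lra.
  assert (Hs : s * s = 1).
  { replace (s * s) with ((n1^2 + n2^2) * (e1^2 + e2^2) - (n1 * e1 + n2 * e2)^2)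
      by (unfold s; ring). rewrite He, Hn, Hd. ring. }
  set (X := b1 * (e1 * p2 + e2 * p1) + b2 * (e1 * p1 - e2 * p2)).
  assert (HX : s * X = 0).
  { rewrite N1, N2 in H. unfold X. lra. }
  replace (b1 * (e1 * p2 + e2 * p1) + b2 * (e1 * p1 - e2 * p2)) with X by reflexivity.
  replace X with (s * (s * X)) by (rewrite <- Rmult_assoc, Hs; ring).
  rewrite HX. ring.
Qed.

Definition bsum (e nu : R * R) (F : R * R -> R) (x0 : R * R) (N : nat) : R :=
  Sm e (N - 1) (fun w => fst nu * pdw (w ++ true :: nil) F x0
                        + snd nu * pdw (w ++ false :: nil) F x0).

Lemma core O lam F N x0 em ep th num nup :
  open O -> smooth_on O F -> O x0 ->
  (forall q, O q -> - lap F q = lam * F q) ->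
  (1 <= N)%nat ->
  (forall w, (2 <= N)%nat -> length w = (N - 2)%nat -> pdw w F x0 = 0) ->
  fst em ^ 2 + snd em ^ 2 = 1 ->
  ep = (cos th * fst em - sin th * snd em, sin th * fst em + cos th * snd em) ->
  sin (INR N * th) <> 0 ->
  fst num ^ 2 + snd num ^ 2 = 1 -> fst num * fst em + snd num * snd em = 0 ->
  fst nup ^ 2 + snd nup ^ 2 = 1 -> fst nup * fst ep + snd nup * snd ep = 0 ->
  bsum em num F x0 N = 0 -> bsum ep nup F x0 N = 0 ->
  forall w, length w = N -> pdw w F x0 = 0.
Proof.
  intros HO HF Hx0 Hhelm HN Hlow Hem Hep Hsin Hnm1 Hnm2 Hnp1 Hnp2 Bm Bp.
  set (c := fun a b => pdw (repeat true a ++ repeat false b) F x0).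
  assert (Hcan : forall w, pdw w F x0 = c (nt w) (nf w)).
  { intros w. apply (canon_eq O F HO HF w x0 Hx0). }
  assert (Harm : forall b, (b + 2 <= N)%nat -> c (N - (b + 2))%nat (b + 2)%nat = - c (N - b)%nat b).
  { intros b Hb.
    set (w' := repeat true (N - (b + 2)) ++ repeat false b).
    assert (Hl : length w' = (N - 2)%nat).
    { unfold w'. rewrite length_app, !repeat_length. lia. }
    assert (E1 : pdw w' (fun q => pdw (true :: true :: nil) F q + pdw (false :: false :: nil) F q) x0
               = pdw w' (fun q => (- lam) * F q) x0).
    { apply (pdw_ext_O O); auto. intros q Hq.
      specialize (Hhelm q Hq). unfold lap in Hhelm. simpl. lra. }
    rewrite pdw_scal, (Hlow w' ltac:(lia) Hl), Rmult_0_r in E1.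
    rewrite (pdw_plus O) in E1; auto; try (apply smooth_pdw; auto).
    rewrite <- !pdw_app, !Hcan in E1.
    unfold w' in E1. rewrite !nt_app, !nf_app, nt_rt, nf_rt, nt_rf, nf_rf in E1.
    simpl in E1.
    replace (N - (b + 2) + 0 + 2)%nat with (N - b)%nat in E1 by lia.
    replace (N - (b + 2) + 0 + 0)%nat with (N - (b + 2))%nat in E1 by lia.
    replace (0 + (b + 0))%nat with b in E1 by lia.
    replace (0 + (b + 2))%nat with (b + 2)%nat in E1 by lia.
    rewrite Nat.add_0_r in E1. lra. }
  set (B := (c N 0%nat, - c (N - 1)%nat 1%nat)).
  assert (Hr2 : forall b, ((b <= N)%nat -> c (N - b)%nat b = fst (cm (Ip b) B)) /\
                          ((S b <= N)%nat -> c (N - S b)%nat (S b) = fst (cm (Ip (S b)) B))).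
  { induction b as [|b [IH1 IH2]].
    - split; intros _.
      + unfold B, cm; simpl. replace (N - 0)%nat with N by lia. ring.
      + unfold B, cm; simpl. ring.
    - split; [exact IH2|]. intros Hb.
      replace (S (S b)) with (b + 2)%nat by lia.
      rewrite Harm by lia. rewrite IH1 by lia.
      replace (b + 2)%nat with (S (S b)) by lia. cbn [Ip].
      destruct (Ip b) as [i1 i2]. destruct B as [b1 b2]. unfold cm; simpl; ring. }
  assert (HV : forall w, length w = N -> pdw w F x0 = fst (cm (Ip (nf w)) B)).
  { intros w Hw. rewrite Hcan. rewrite <- (ntnf w) in Hw.
    replace (nt w) with (N - nf w)%nat by lia. apply Hr2. lia. }
  assert (Hbs : forall e nu, bsum e nu F x0 N = fst (cm (cm nu B) (Ep e (N - 1)))).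
  { intros e nu. unfold bsum. rewrite <- Sm_Ip. apply Sm_ext. intros w Hw.
    rewrite !HV by (rewrite length_app; simpl; lia).
    rewrite !nf_app. simpl. replace (nf w + 1)%nat with (S (nf w)) by lia.
    replace (nf w + 0)%nat with (nf w) by lia. cbn [Ip].
    destruct (Ip (nf w)) as [i1 i2]; destruct B as [b1 b2]; destruct nu as [n1 n2].
    unfold cm; simpl; ring. }
  assert (HEp : forall e, Ep e N = cm e (Ep e (N - 1))).
  { intros e. replace N with (S (N - 1)) at 1 by lia. reflexivity. }
  assert (Sm0 : snd (cm B (Ep em N)) = 0).
  { rewrite HEp. rewrite Hbs in Bm. destruct em as [e1 e2], num as [n1 n2], B as [b1 b2],
      (Ep (e1, e2) (N - 1)) as [p1 p2]. apply (alg_normal e1 e2 n1 n2 b1 b2 p1 p2); cbn [fst snd] in *; assumption. }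
  assert (Hepn : fst ep ^ 2 + snd ep ^ 2 = 1).
  { rewrite Hep. cbn [fst snd].
    transitivity ((cos th ^ 2 + sin th ^ 2) * (fst em ^ 2 + snd em ^ 2)); [ring|].
    assert (Hsc := sin2_cos2 th). unfold Rsqr in Hsc.
    rewrite Hem. replace (cos th ^ 2 + sin th ^ 2) with 1 by (rewrite <- Hsc; ring). ring. }
  assert (Sp0 : snd (cm B (Ep ep N)) = 0).
  { rewrite HEp. rewrite Hbs in Bp. destruct ep as [e1 e2], nup as [n1 n2], B as [b1 b2],
      (Ep (e1, e2) (N - 1)) as [p1 p2].
    apply (alg_normal e1 e2 n1 n2 b1 b2 p1 p2); cbn [fst snd] in *; assumption. }
  assert (Hepc : ep = cm (cos th, sin th) em).
  { rewrite Hep. unfold cm; simpl. f_equal; ring. }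
  rewrite Hepc, Ep_mul, Ep_trig in Sp0.
  assert (Hq : fst (Ep em N) ^ 2 + snd (Ep em N) ^ 2 = 1).
  { clear - Hem. destruct em as [e1 e2]. cbn [fst snd] in Hem.
    induction N as [|N IH].
    - cbn. ring.
    - cbn [Ep]. destruct (Ep (e1, e2) N) as [p1 p2]. unfold cm. cbn [fst snd] in *.
      replace 1 with ((e1 ^ 2 + e2 ^ 2) * (p1 ^ 2 + p2 ^ 2)) by (rewrite Hem, IH; ring).
      ring. }
  assert (HB0 : B = (0, 0)).
  { destruct B as [b1 b2]. destruct (Ep em N) as [q1 q2].
    unfold cm in Sm0, Sp0; cbn [fst snd] in Sm0, Sp0, Hq.
    set (s := sin (INR N * th)) in *. set (co := cos (INR N * th)) in *.
    assert (Y : s * (b1 * q1 - b2 * q2) = 0).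
    { replace (s * (b1 * q1 - b2 * q2)) with
        (b1 * (co * q2 + s * q1) + b2 * (co * q1 - s * q2) - co * (b1 * q2 + b2 * q1)) by ring.
      rewrite Sm0. lra. }
    apply Rmult_integral in Y. destruct Y as [Y|Y]; [contradiction|].
    f_equal.
    - replace b1 with (q1 * (b1 * q1 - b2 * q2) + q2 * (b1 * q2 + b2 * q1))
        by (transitivity (b1 * (q1 ^ 2 + q2 ^ 2)); [ring|rewrite Hq; ring]).
      rewrite Y, Sm0. ring.
    - replace b2 with (q1 * (b1 * q2 + b2 * q1) - q2 * (b1 * q1 - b2 * q2))
        by (transitivity (b2 * (q1 ^ 2 + q2 ^ 2)); [ring|rewrite Hq; ring]).
      rewrite Y, Sm0. ring. }
  intros w Hw. rewrite HV by exact Hw. rewrite HB0. destruct (Ip (nf w)). unfold cm; simpl; ring.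
Qed.

Lemma seg0 x0 e : seg_pt x0 e 0 = x0.
Proof. destruct x0; unfold seg_pt; simpl; f_equal; ring. Qed.

Lemma sin_nz alpha N n : 0 < alpha < 1 -> (1 <= N)%nat -> (N <= n - 1)%nat ->
  (forall p q : nat, (1 <= q)%nat -> (q < p)%nat -> (p <= n - 1)%nat ->
     alpha <> INR q / INR p) ->
  sin (INR N * (alpha * PI)) <> 0.
Proof.
  intros Ha HN Hn Hq Hs. apply sin_eq_0_0 in Hs. destruct Hs as [k Hk].
  assert (HP := PI_RGT_0).
  assert (HNp : 0 < INR N) by (apply lt_0_INR; lia).
  assert (Hk2 : INR N * alpha = IZR k).
  { apply Rmult_eq_reg_r with PI; [|lra]. rewrite <- Hk. ring. }
  assert (Hk0 : 0 < IZR k) by (rewrite <- Hk2; apply Rmult_lt_0_compat; lra).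
  assert (HkN : IZR k < INR N).
  { rewrite <- Hk2. replace (INR N) with (INR N * 1) at 2 by ring.
    apply Rmult_lt_compat_l; lra. }
  apply lt_0_IZR in Hk0.
  set (q := Z.to_nat k).
  assert (Eq : INR q = IZR k) by (unfold q; rewrite INR_IZR_INZ, Z2Nat.id; [reflexivity|lia]).
  assert (Hq1 : (1 <= q)%nat) by (unfold q; lia).
  assert (Hq2 : (q < N)%nat) by (apply INR_lt; rewrite Eq; exact HkN).
  apply (Hq N q Hq1 Hq2 Hn).
  rewrite Eq, <- Hk2. field. lra.
Qed.

Theorem theorem3p1
  (Omega : R * R -> Prop) (lam : R) (u : R * R -> C)
  (x0 em ep : R * R) (h alpha : R) (C1 C2 : C) (n : nat) :
  open Omega ->
  0 < lam ->
  smooth_on Omega (ReF u) -> smooth_on Omega (ImF u) ->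
  helmholtz Omega lam u ->
  Omega x0 ->
  0 < h ->
  0 < alpha < 1 ->
  fst em ^ 2 + snd em ^ 2 = 1 ->
  (* e^+ is e^- rotated counterclockwise by alpha * PI *)
  ep = (cos (alpha * PI) * fst em - sin (alpha * PI) * snd em,
        sin (alpha * PI) * fst em + cos (alpha * PI) * snd em) ->
  (forall t, 0 <= t <= h -> Omega (seg_pt x0 em t)) ->
  (forall t, 0 <= t <= h -> Omega (seg_pt x0 ep t)) ->
  gen_singular_line u x0 em h C1 ->
  gen_singular_line u x0 ep h C2 ->
  (3 <= n)%nat ->
  u x0 = RtoC 0 ->
  (forall p q : nat, (1 <= q)%nat -> (q < p)%nat -> (p <= n - 1)%nat ->
     alpha <> INR q / INR p) ->
  forall w : list bool, (length w <= n - 1)%nat ->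
    pdw w (ReF u) x0 = 0 /\ pdw w (ImF u) x0 = 0.
Proof.
  intros HO Hlam Hf Hg Hh Hx0 Hhp Ha Hem Hep Hsm Hsp [_ [num [Hnm1 [Hnm2 Hbm]]]]
    [_ [nup [Hnp1 [Hnp2 Hbp]]]] Hn Hu0 Hq.
  set (f := ReF u) in *. set (g := ImF u) in *.
  assert (Rfm : forall k, Sm em k (fun w => Xr f g num (fst C1) (- snd C1) w x0) = 0).
  { intros k. rewrite <- (seg0 x0 em).
    apply (ray_vanish Omega f g num (fst C1) (- snd C1) x0 em h); auto; [|lra].
    intros t Ht. specialize (Hbm t Ht). apply (f_equal fst) in Hbm.
    unfold Xr. simpl in Hbm |- *. unfold f, g, ReF, ImF, Re, Im in Hbm, Hbp |- *. lra. }
  assert (Rgm : forall k, Sm em k (fun w => Xr g f num (fst C1) (snd C1) w x0) = 0).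
  { intros k. rewrite <- (seg0 x0 em).
    apply (ray_vanish Omega g f num (fst C1) (snd C1) x0 em h); auto; [|lra].
    intros t Ht. specialize (Hbm t Ht). apply (f_equal snd) in Hbm.
    unfold Xr. simpl in Hbm |- *. unfold f, g, ReF, ImF, Re, Im in Hbm, Hbp |- *. lra. }
  assert (Rfp : forall k, Sm ep k (fun w => Xr f g nup (fst C2) (- snd C2) w x0) = 0).
  { intros k. rewrite <- (seg0 x0 ep).
    apply (ray_vanish Omega f g nup (fst C2) (- snd C2) x0 ep h); auto; [|lra].
    intros t Ht. specialize (Hbp t Ht). apply (f_equal fst) in Hbp.
    unfold Xr. simpl in Hbp |- *. unfold f, g, ReF, ImF, Re, Im in Hbm, Hbp |- *. lra. }
  assert (Rgp : forall k, Sm ep k (fun w => Xr g f nup (fst C2) (snd C2) w x0) = 0).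
  { intros k. rewrite <- (seg0 x0 ep).
    apply (ray_vanish Omega g f nup (fst C2) (snd C2) x0 ep h); auto; [|lra].
    intros t Ht. specialize (Hbp t Ht). apply (f_equal snd) in Hbp.
    unfold Xr. simpl in Hbp |- *. unfold f, g, ReF, ImF, Re, Im in Hbm, Hbp |- *. lra. }
  assert (Main : forall N, (N <= n - 1)%nat -> forall w, length w = N ->
                 pdw w f x0 = 0 /\ pdw w g x0 = 0).
  { intros N. induction N as [N IH] using lt_wf_ind. intros HN w Hw.
    destruct N as [|N'].
    - destruct w; [|discriminate]. simpl. unfold f, g, ReF, ImF. rewrite Hu0. simpl. auto.
    - set (N := S N') in *.
      assert (H1 : (1 <= N)%nat) by (unfold N; lia).
      assert (Hs := sin_nz alpha N n Ha H1 HN Hq).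
      assert (Hlow : forall w, (2 <= N)%nat -> length w = (N - 2)%nat ->
                 pdw w f x0 = 0 /\ pdw w g x0 = 0).
      { intros w' H2 Hw'. apply (IH (N - 2)%nat); [lia|lia|exact Hw']. }
      assert (Hlow1 : forall w, length w = (N - 1)%nat ->
                 pdw w f x0 = 0 /\ pdw w g x0 = 0).
      { intros w' Hw'. apply (IH (N - 1)%nat); [lia|lia|exact Hw']. }
      split.
      + apply (core Omega lam f N x0 em ep (alpha * PI) num nup); auto.
        * intros q Hq0. apply (Hh q Hq0).
        * intros w' H2 Hw'. apply (Hlow w' H2 Hw').
        * unfold bsum. rewrite <- (Rfm (N - 1)%nat). apply Sm_ext. intros w' Hw'.
          unfold Xr. destruct (Hlow1 w' Hw') as [Z1 Z2]. rewrite Z1, Z2. ring.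
        * unfold bsum. rewrite <- (Rfp (N - 1)%nat). apply Sm_ext. intros w' Hw'.
          unfold Xr. destruct (Hlow1 w' Hw') as [Z1 Z2]. rewrite Z1, Z2. ring.
      + apply (core Omega lam g N x0 em ep (alpha * PI) num nup); auto.
        * intros q Hq0. apply (Hh q Hq0).
        * intros w' H2 Hw'. apply (Hlow w' H2 Hw').
        * unfold bsum. rewrite <- (Rgm (N - 1)%nat). apply Sm_ext. intros w' Hw'.
          unfold Xr. destruct (Hlow1 w' Hw') as [Z1 Z2]. rewrite Z1, Z2. ring.
        * unfold bsum. rewrite <- (Rgp (N - 1)%nat). apply Sm_ext. intros w' Hw'.
          unfold Xr. destruct (Hlow1 w' Hw') as [Z1 Z2]. rewrite Z1, Z2. ring. }
  intros w Hw. apply (Main (length w) Hw w eq_refl).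
Qed.
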